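(* Let $\mathbf{c}_{0:n}=(c_0,\dots,c_n)$ be a vector of covariance lags of some bounded non-negative measure on $\mathbb{T}$ such that the Toeplitz matrix $T_n=[c_{k-\ell}]_{k,\ell=0}^n$ (with $c_{-k}=\bar c_k$) is singular, and let $\hat{\mathbf{c}}_{0:n}(k)$, $k=1,2,\dots$, be a sequence of vectors of covariance lags (each the first $n+1$ covariances of some bounded non-negative measure on $\mathbb{T}$) with $\hat{\mathbf{c}}_{0:n}(k)\to\mathbf{c}_{0:n}$ as $k\to\infty$. If $\delta$ is a weakly continuous metric on the set $\mathfrak{M}$ of bounded non-negative measures on $\mathbb{T}$, then $\rho_\delta(\mathcal{F}_{\hat{\mathbf{c}}_{0:n}(k)})\to0$ as $k\to\infty$.
   Context: Covariance lags of $d\mu$: $c_k=\frac{1}{2\pi}\int_{-\pi}^{\pi}e^{-ik\theta}d\mu(\theta)$. For $\mathbf{a}=(a_0,\dots,a_n)$, $\mathcal{F}_{\mathbf{a}}=\{d\mu\in\mathfrak{M}:\frac{1}{2\pi}\int_{-\pi}^{\pi}e^{-ik\theta}d\mu(\theta)=a_k,\ k=0,\dots,n\}$. The diameter is $\rho_\delta(\mathcal{F})=\sup\{\delta(d\mu_0,d\mu_1):d\mu_0,d\mu_1\in\mathcal{F}\}$. Weak topology on $\mathfrak{M}$: $d\mu_k\to d\mu$ iff $\int fd\mu_k\to\int fd\mu$ for all real continuous $f$ on $\mathbb{T}$; $\delta$ is weakly continuous if it is continuous on $\mathfrak{M}\times\mathfrak{M}$ for this topology. *)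

(* Defs.v *)
From HB Require Import structures.
From mathcomp Require Import all_boot all_order all_algebra.
From mathcomp Require Import all_classical all_reals all_analysis.
From mathcomp Require Import complex.
Set Implicit Arguments. Unset Strict Implicit. Unset Printing Implicit Defensive.
Import Order.TTheory GRing.Theory Num.Theory.
Import numFieldNormedType.Exports.
Local Open Scope classical_set_scope.
Local Open Scope ring_scope.

(* Measures on the unit circle T are modelled as finite (Borel) measures on R
   concentrated on the fundamental domain [-pi, pi[ (theta <-> e^{i theta}). *)
Notation tmeas R := {finite_measure set (measurableTypeR R) -> \bar R}.

Definition onT (R : realType) (mu : tmeas R) : Prop :=
  mu (~` `[(- pi)%R, pi[%classic) = 0%E.

Definition rint (R : realType) (mu : tmeas R) (f : R -> R) : R :=
  fine (\int[mu]_x (f x)%:E)%E.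

Definition covlag (R : realType) (mu : tmeas R) (k : nat) : R[i] :=
  Complex ((2 * pi)^-1 * rint mu (fun t => cos (k%:R * t)))
          (- ((2 * pi)^-1 * rint mu (fun t => sin (k%:R * t)))).

Definition is_covlags (R : realType) (n : nat) (a : 'I_n.+1 -> R[i]) : Prop :=
  exists mu : tmeas R, onT mu /\ forall k : 'I_n.+1, covlag mu k = a k.

Definition Fset (R : realType) (n : nat) (a : 'I_n.+1 -> R[i]) : set (tmeas R) :=
  [set mu | onT mu /\ forall k : 'I_n.+1, covlag mu k = a k].

Definition toeplitz (R : realType) (n : nat) (c : 'I_n.+1 -> R[i]) : 'M[R[i]]_n.+1 :=
  \matrix_(k, l) (if (l <= k)%N then c (inord (k - l)) else (c (inord (l - k)))^*%C).

(* real continuous functions on T = continuous 2pi-periodic functions on R *)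
Definition contT (R : realType) (f : R -> R) : Prop :=
  continuous f /\ forall x, f (x + 2 * pi) = f x.

Definition is_metric (R : realType) (delta : tmeas R -> tmeas R -> R) : Prop :=
  [/\ forall m0 m1, onT m0 -> onT m1 -> 0 <= delta m0 m1,
      forall m0 m1, onT m0 -> onT m1 ->
        (delta m0 m1 = 0 <-> forall A, measurable A -> m0 A = m1 A),
      forall m0 m1, onT m0 -> onT m1 -> delta m0 m1 = delta m1 m0 &
      forall m0 m1 m2, onT m0 -> onT m1 -> onT m2 ->
        delta m0 m2 <= delta m0 m1 + delta m1 m2].

Definition weak_nbhd (R : realType) (mu : tmeas R) (fs : seq (R -> R)) (eta : R)
  (nu : tmeas R) : Prop :=
  onT nu /\ forall f, f \in fs -> `|rint nu f - rint mu f| < eta.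

(* delta is continuous on M x M for the product of the weak topologies *)
Definition weakly_continuous (R : realType) (delta : tmeas R -> tmeas R -> R) : Prop :=
  forall m0 m1, onT m0 -> onT m1 -> forall eps : R, 0 < eps ->
    exists (fs0 fs1 : seq (R -> R)) (eta : R),
      [/\ forall f, f \in fs0 -> contT f, forall f, f \in fs1 -> contT f, 0 < eta &
      forall n0 n1, weak_nbhd m0 fs0 eta n0 -> weak_nbhd m1 fs1 eta n1 ->
        `|delta n0 n1 - delta m0 m1| < eps].

Definition diam (R : realType) (delta : tmeas R -> tmeas R -> R) (F : set (tmeas R)) : \bar R :=
  ereal_sup [set (delta m0 m1)%:E | m0 in F & m1 in F].

(* Main.v *)
Require Import Defs.
From HB Require Import structures.
From mathcomp Require Import all_boot all_order all_algebra.
From mathcomp Require Import all_classical all_reals all_analysis.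
From mathcomp Require Import complex.
From mathcomp Require Import ring lra measurable_realfun.
Set Implicit Arguments. Unset Strict Implicit. Unset Printing Implicit Defensive.
Import Order.TTheory GRing.Theory Num.Theory.
Import numFieldNormedType.Exports.
Local Open Scope classical_set_scope.
Local Open Scope ring_scope.

Notation cRe := complex.Re.
Notation cIm := complex.Im.
Section S.
Variable R : realType.
Definition Ec (t : R) : R[i] := Complex (cos t) (sin t).

Lemma ReM (x y : R[i]) : cRe (x * y) = cRe x * cRe y - cIm x * cIm y.
Proof. by case: x => a b; case: y => c d; rewrite /= ?mulcE. Qed.
Lemma ImM (x y : R[i]) : cIm (x * y) = cRe x * cIm y + cIm x * cRe y.
Proof. by case: x => a b; case: y => c d; rewrite /= ?mulcE. Qed.
Lemma ReD (x y : R[i]) : cRe (x + y) = cRe x + cRe y.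
Proof. by case: x => a b; case: y => c d; rewrite /= ?mulcE. Qed.
Lemma ImD (x y : R[i]) : cIm (x + y) = cIm x + cIm y.
Proof. by case: x => a b; case: y => c d; rewrite /= ?mulcE. Qed.
Lemma Re_sum (I : Type) (s : seq I) (P : pred I) (F : I -> R[i]) :
  cRe (\sum_(i <- s | P i) F i) = \sum_(i <- s | P i) cRe (F i).
Proof. elim: s => [|x s IH]; rewrite ?big_nil ?big_cons //; case: (P x); rewrite ?ReD IH //. Qed.
Lemma Re_conj (x : R[i]) : cRe (x^*)%C = cRe x. Proof. by case: x. Qed.
Lemma Im_conj (x : R[i]) : cIm (x^*)%C = - cIm x. Proof. by case: x. Qed.

Lemma Ec_exp (t : R) k : Ec t ^+ k = Ec (k%:R * t).
Proof.
elim: k => [|k IH]; first by rewrite expr0 mul0r /Ec cos0 sin0.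
rewrite exprSr IH /Ec; apply/eqP; rewrite eq_complex; apply/andP; split; apply/eqP.
  by rewrite ReM /= -cosD mulrSr mulrDl mul1r.
by rewrite ImM /= mulrSr mulrDl mul1r sinD addrC.
Qed.

Lemma conjEc_Ec (a b : R) : (Ec a)^*%C * Ec b = Ec (b - a).
Proof.
rewrite /Ec; apply/eqP; rewrite eq_complex; apply/andP; split; apply/eqP.
  by rewrite ReM /= cosB; lra.
by rewrite ImM /= sinB; lra.
Qed.
End S.
Section Meas.
Variable R : realType.
Local Notation D := (`[(- pi)%R, pi[%classic : set R).

Lemma mD : measurable D.
Proof. exact: measurable_itv. Qed.

Lemma cont_bounded (f : R -> R) : continuous f ->
  exists M, forall t, - pi <= t <= pi -> `|f t| <= M.
Proof.
move=> cf.
have pp : - pi <= (pi : R) by have := @pi_ge0 R; lra.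
have [c _ Hc] := @EVT_max R (fun t => `|f t|) (- pi) pi pp
  (continuous_subspaceT (fun x => continuous_comp (cf x) (@norm_continuous _ R (f x)))).
by exists `|f c| => t ht; apply: (Hc t); rewrite in_itv.
Qed.

Lemma int_cont (mu : tmeas R) (f : R -> R) : onT mu -> continuous f ->
  mu.-integrable setT (EFin \o f).
Proof.
move=> hmu cf.
have mf : measurable_fun setT f := continuous_measurable_fun cf.
have mN : measurable (~` D) by apply: measurableC; exact: mD.
apply/(@negligible_integrable _ _ _ mu setT (~` D) _ mN measurableT _ hmu).
  by apply/measurable_EFinP.
rewrite setTD setCK.
apply: measurable_bounded_integrable; first exact: mD.
- by rewrite ltey_eq fin_num_measure//; exact: mD.
- exact: measurable_funS mf.
have [M HM] := cont_bounded cf.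
exists M; split; first by rewrite num_real.
move=> M' hM' x /= /[!in_itv] /= /andP[h1 h2]; apply: le_trans (HM x _) (ltW hM').
by rewrite h1 (ltW h2).
Qed.

Lemma rintE (mu : tmeas R) (f : R -> R) : onT mu -> continuous f ->
  rint mu f = Rintegral mu D f.
Proof.
move=> hmu cf; rewrite /rint /Rintegral.
have mN : measurable (~` D) by apply: measurableC; exact: mD.
rewrite (@negligible_integral _ _ _ mu setT (~` D) (EFin \o f) mN measurableT _ hmu) ?setTD ?setCK //; exact: int_cont.
Qed.

Lemma contD (f g : R -> R) : continuous f -> continuous g -> continuous (fun t => f t + g t).
Proof. by move=> cf cg x; exact: (continuousD (cf x) (cg x)). Qed.
Lemma contM (f g : R -> R) : continuous f -> continuous g -> continuous (fun t => f t * g t).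
Proof. by move=> cf cg x; exact: (continuousM (cf x) (cg x)). Qed.
Lemma contN (f : R -> R) : continuous f -> continuous (fun t => - f t).
Proof. by move=> cf x; exact: (continuousN (cf x)). Qed.
Lemma contC (r : R) : continuous (fun _ : R => r).
Proof. by move=> x; apply: cst_continuous. Qed.
Lemma contId : continuous (fun t : R => t).
Proof. by move=> x. Qed.
Lemma contB (f g : R -> R) : continuous f -> continuous g -> continuous (fun t => f t - g t).
Proof. by move=> cf cg; exact: (contD cf (contN cg)). Qed.
Lemma contComp (f g : R -> R) : continuous f -> continuous g -> continuous (fun t => g (f t)).
Proof. move=> cf cg x; exact: (continuous_comp (cf x) (cg (f x))). Qed.
Lemma cont_cos (a : R) : continuous (fun t => cos (a * t)).
Proof. exact: (contComp (contM (@contC a) contId) (@continuous_cos R)). Qed.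
Lemma cont_sin (a : R) : continuous (fun t => sin (a * t)).
Proof. exact: (contComp (contM (@contC a) contId) (@continuous_sin R)). Qed.
Lemma cont_sum (I : Type) (s : seq I) (F : I -> R -> R) :
  (forall i, continuous (F i)) -> continuous (fun t => \sum_(i <- s) F i t).
Proof.
move=> cF; elim: s => [|i s IH].
  by under eq_fun do rewrite big_nil; exact: (@contC _).
by under eq_fun do rewrite big_cons; exact: contD.
Qed.

Section Rint.
Variable mu : tmeas R.
Hypothesis hmu : onT mu.

Lemma intD (h : R -> R) : continuous h -> mu.-integrable D (EFin \o h).
Proof. move=> ch; apply: (@integrableS _ _ _ mu setT D _ measurableT mD) => //; exact: int_cont. Qed.

Lemma rintD (f g : R -> R) : continuous f -> continuous g ->
  rint mu (fun t => f t + g t) = rint mu f + rint mu g.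
Proof.
move=> cf cg; rewrite !rintE //; last exact: contD.
by apply: RintegralD; [exact: mD|exact: intD|exact: intD].
Qed.

Lemma rintZ (r : R) (f : R -> R) : continuous f ->
  rint mu (fun t => r * f t) = r * rint mu f.
Proof.
move=> cf; rewrite !rintE //; last exact: contM (@contC r) cf.
by apply: RintegralZl; [exact: mD|exact: intD].
Qed.

Lemma rintN (f : R -> R) : continuous f -> rint mu (fun t => - f t) = - rint mu f.
Proof.
move=> cf; rewrite -mulN1r -rintZ //; congr rint; apply/funext => t; by rewrite mulN1r.
Qed.

Lemma rintB (f g : R -> R) : continuous f -> continuous g ->
  rint mu (fun t => f t - g t) = rint mu f - rint mu g.
Proof. by move=> cf cg; rewrite rintD ?rintN //; exact: contN. Qed.

Lemma rint_le (f g : R -> R) : continuous f -> continuous g ->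
  (forall t, - pi <= t <= pi -> f t <= g t) -> rint mu f <= rint mu g.
Proof.
move=> cf cg fg; rewrite !rintE //.
apply: le_Rintegral; [exact: mD|exact: intD|exact: intD|].
move=> x /= /[!in_itv] /= /andP[h1 h2]; apply: fg; by rewrite h1 (ltW h2).
Qed.

Lemma rint0 : rint mu (fun _ => 0) = 0.
Proof.
by have := rintZ 0 (@contC 1); rewrite !mul0r.
Qed.

Lemma rint_sum (I : Type) (s : seq I) (F : I -> R -> R) :
  (forall i, continuous (F i)) ->
  rint mu (fun t => \sum_(i <- s) F i t) = \sum_(i <- s) rint mu (F i).
Proof.
move=> cF; elim: s => [|i s IH].
  rewrite big_nil; under eq_fun do rewrite big_nil.
  exact: rint0.
rewrite big_cons -IH; under eq_fun do rewrite big_cons.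
rewrite rintD //; exact: cont_sum.
Qed.

Lemma rint_ge0 (f : R -> R) : continuous f ->
  (forall t, - pi <= t <= pi -> 0 <= f t) -> 0 <= rint mu f.
Proof.
move=> cf hf; rewrite -rint0.
by apply: rint_le => //; exact: (@contC _).
Qed.
End Rint.
End Meas.

Ltac cont := repeat first [exact: contC | exact: contId | exact: cont_cos | exact: cont_sin
  | apply: contB | apply: contD | apply: contM | apply: contN].

Section Trig.
Variable R : realType.
Definition tt (w : R[i]) (x : R) (t : R) := cRe w * cos (x * t) - cIm w * sin (x * t).

Lemma tt_cont w x : continuous (tt w x).
Proof. by rewrite /tt; cont. Qed.

Lemma ttE w x t : tt w x t = cRe (w * Ec (x * t)).
Proof. by rewrite ReM. Qed.

Lemma pi2_neq0 : (2 * pi : R) != 0.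
Proof. by rewrite mulf_neq0 // gt_eqF // pi_gt0. Qed.

Lemma rint_cos (mu : tmeas R) (k : nat) :
  rint mu (fun t => cos (k%:R * t)) = 2 * pi * cRe (covlag mu k).
Proof. by rewrite /covlag /= mulrA mulfV ?mul1r // pi2_neq0. Qed.

Lemma rint_sin (mu : tmeas R) (k : nat) :
  rint mu (fun t => sin (k%:R * t)) = - (2 * pi * cIm (covlag mu k)).
Proof. by rewrite /covlag /= mulrN opprK mulrA mulfV ?mul1r // pi2_neq0. Qed.

Lemma rint_tt_pos (mu : tmeas R) w (k : nat) : onT mu ->
  rint mu (tt w k%:R) = 2 * pi * cRe (w * (covlag mu k)^*%C).
Proof.
move=> hmu; rewrite /tt rintB ?rintZ ?rint_cos ?rint_sin //;
  cont.
rewrite ReM Re_conj Im_conj; lra.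
Qed.

Lemma rint_tt_neg (mu : tmeas R) w (k : nat) : onT mu ->
  rint mu (tt w (- k%:R)) = 2 * pi * cRe (w * covlag mu k).
Proof.
move=> hmu.
have -> : tt w (- k%:R) = fun t => cRe w * cos (k%:R * t) - (- cIm w) * sin (k%:R * t).
  by apply/funext => t; rewrite /tt mulNr cosN sinN; lra.
rewrite rintB ?rintZ ?rint_cos ?rint_sin //;
  cont.
rewrite ReM; lra.
Qed.
End Trig.

Lemma interp (K : fieldType) (s : seq K) (val : K -> K) : uniq s ->
  exists p : {poly K}, (size p <= size s)%N /\ forall z, z \in s -> p.[z] = val z.
Proof.
elim: s => [|z s IH] /=.
  by move=> _; exists 0; rewrite size_poly0.
move=> /andP[zs us]; have [p [sp hp]] := IH us.
set D := \prod_(w <- s) (z - w).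
have D0 : D != 0.
  rewrite /D prodf_seq_neq0; apply/allP => w ws /=; rewrite subr_eq0; apply: contraNneq zs => ->//.
set q := \prod_(w <- s) ('X - w%:P).
have qE x : q.[x] = \prod_(w <- s) (x - w).
  by rewrite /q horner_prod; apply: eq_bigr => w _; rewrite hornerXsubC.
exists (p + ((val z - p.[z]) / D) *: q); split.
  apply: leq_trans (size_polyD _ _) _; rewrite geq_max; apply/andP; split.
    exact: leq_trans sp (leqnSn _).
  by apply: leq_trans (size_scale_leq _ _) _; rewrite /q size_prod_XsubC.
move=> x; rewrite in_cons => /orP[/eqP ->|xs].
  rewrite hornerD hornerZ qE -/D mulfVK //; ring.
rewrite hornerD hornerZ qE (bigD1_seq x) //= subrr mul0r mulr0 addr0; exact: hp.
Qed.

Section Trig2.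
Variable R : realType.

Lemma cos_eq1 (x : R) : `|x| <= 2 * pi -> cos x = 1 -> [\/ x = 0, x = 2 * pi | x = - (2 * pi)].
Proof.
move=> hx c1.
have pi0 := @pi_ge0 R.
have cy : cos `|x| = 1 by rewrite cos_norm.
have y0 : `|x| = 0 \/ `|x| = 2 * pi.
  have [ylepi|ygtpi] := leP `|x| pi.
    left; apply: (@cos_inj R) => //; rewrite ?cos0 // in_itv /=; last by rewrite lexx pi0.
    by rewrite normr_ge0 ylepi.
  right.
  have e2 : (2 * pi : R) = pi *+ 2 by rewrite mulr_natl.
  have h1 : 2 * pi - `|x| \in `[0, pi] by rewrite in_itv /=; apply/andP; split; lra.
  have h2 : (0:R) \in `[0, pi] by rewrite in_itv /= lexx pi0.
  have h3 : cos (2 * pi - `|x|) = cos 0 by rewrite cos0 cosB cy e2 cos2pi sin2pi; lra.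
  have := cos_inj h1 h2 h3; lra.
case: y0 => hy.
  by constructor 1; apply/normr0_eq0.
move: hy; case: (ger0P x) => hx0 hy.
  by constructor 2.
by constructor 3; rewrite -hy opprK.
Qed.

Lemma Ec_eq_f (f : R -> R) : contT f -> forall a b : R,
  - pi <= a <= pi -> - pi <= b <= pi -> Ec a = Ec b -> f a = f b.
Proof.
move=> [_ fp] a b /andP[a1 a2] /andP[b1 b2] [ca sa].
have c1 : cos (a - b) = 1 by rewrite cosB ca sa -!expr2 cos2Dsin2.
have hx : `|a - b| <= 2 * pi by rewrite ler_norml; apply/andP; split; lra.
case: (cos_eq1 hx c1) => h.
- by have -> : a = b by lra.
- by have -> : a = b + 2 * pi by lra.
- by have -> : b = a + 2 * pi by lra.
Qed.
End Trig2.

Section Poly.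
Variables (R : realType) (n : nat) (b : 'I_n.+1 -> R[i]).

Definition wk (k l : 'I_n.+1) := (b k)^*%C * b l.
Definition Pf (t : R) := \sum_(k < n.+1) \sum_(l < n.+1) tt (wk k l) (l%:R - k%:R) t.
Definition Qp : {poly R[i]} := \poly_(l < n.+1) b (inord l).

Lemma QpE t : Qp.[Ec t] = \sum_(l < n.+1) b l * Ec (l%:R * t).
Proof. by rewrite horner_poly; apply: eq_bigr => l _; rewrite Ec_exp inord_val. Qed.

Lemma Pf_eq t : Pf t = cRe (Qp.[Ec t]) ^+ 2 + cIm (Qp.[Ec t]) ^+ 2.
Proof.
have -> : cRe (Qp.[Ec t]) ^+ 2 + cIm (Qp.[Ec t]) ^+ 2 = cRe ((Qp.[Ec t])^*%C * Qp.[Ec t]).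
  by rewrite ReM Re_conj Im_conj; ring.
rewrite QpE rmorph_sum /= mulr_suml Re_sum; apply: eq_bigr => k _.
rewrite mulr_sumr Re_sum; apply: eq_bigr => l _.
rewrite ttE /wk rmorphM; congr cRe; rewrite mulrBl -conjEc_Ec; ring.
Qed.

Lemma Pf_cont : continuous Pf.
Proof. apply: cont_sum => k; apply: cont_sum => l; exact: tt_cont. Qed.

Lemma Pf_ge0 t : 0 <= Pf t.
Proof. by rewrite Pf_eq addr_ge0 // sqr_ge0. Qed.

Lemma Pf_eq0 t : Pf t = 0 -> root Qp (Ec t).
Proof.
rewrite Pf_eq => h; apply/eqP.
have h1 : cRe (Qp.[Ec t]) ^+ 2 = 0.
  by apply/eqP; rewrite eq_le sqr_ge0 andbT -h lerDl sqr_ge0.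
have h2 : cIm (Qp.[Ec t]) ^+ 2 = 0 by move: h; rewrite h1 add0r.
move: h1 h2; case: (Qp.[Ec t]) => x y /= /eqP; rewrite sqrf_eq0 => /eqP -> /eqP.
by rewrite sqrf_eq0 => /eqP ->.
Qed.

Definition tau (x : 'I_n.+1 -> R[i]) (k l : 'I_n.+1) :=
  if (k <= l)%N then (x (inord (l - k)))^*%C else x (inord (k - l)).
Definition Phi (x : 'I_n.+1 -> R[i]) :=
  \sum_(k < n.+1) \sum_(l < n.+1) 2 * pi * cRe (wk k l * tau x k l).

Lemma rint_Pf (mu : tmeas R) : onT mu ->
  rint mu Pf = Phi (fun j => covlag mu j).
Proof.
move=> hmu; rewrite /Pf /Phi (rint_sum hmu); last first.
  by move=> k; apply: cont_sum => l; exact: tt_cont.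
apply: eq_bigr => k _; rewrite (rint_sum hmu); last by move=> l; exact: tt_cont.
apply: eq_bigr => l _; rewrite /tau.
case: leqP => kl.
  rewrite inordK; last by apply: leq_ltn_trans (leq_subr _ _) (ltn_ord l).
  by rewrite -natrB // rint_tt_pos.
rewrite inordK; last by apply: leq_ltn_trans (leq_subr _ _) (ltn_ord k).
rewrite -[_ - _]opprK opprB -natrB ?rint_tt_neg //; exact: ltnW.
Qed.
End Poly.

Lemma Phi_toeplitz (R : realType) (n : nat) (c : 'I_n.+1 -> R[i]) (v : 'rV[R[i]]_n.+1) :
  v *m toeplitz c = 0 -> Phi (fun l => (v 0 l)^*%C) c = 0.
Proof.
move=> vT; rewrite /Phi big1 // => k _.
rewrite -mulr_sumr -Re_sum.
have -> : \sum_(l < n.+1) wk (fun l => (v 0 l)^*%C) k l * tau c k l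
    = v 0 k * ((v *m toeplitz c) 0 k)^*%C.
  rewrite !mxE rmorph_sum mulr_sumr; apply: eq_bigr => l _.
  rewrite /wk /tau conjcK rmorphM /= !mxE -mulrA; congr (_ * (_ * _)).
  by case: leqP => //; rewrite conjcK.
by rewrite vT mxE conjc0 mulr0 mulr0.
Qed.

Section Cvg.
Variable R : realType.

Lemma cvg_lin (u v : nat -> R) (a b A B : R) : u @ \oo --> A -> v @ \oo --> B ->
  (fun k => a * u k + b * v k) @ \oo --> a * A + b * B.
Proof. move=> hu hv; apply: cvgD; apply: cvgMl_tmp; [exact: hu|exact: hv]. Qed.

Lemma cvg_sumR (I : Type) (s : seq I) (u : I -> nat -> R) (l : I -> R) :
  (forall i, u i @ \oo --> l i) ->
  (fun k => \sum_(i <- s) u i k) @ \oo --> \sum_(i <- s) l i.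
Proof.
move=> hu; elim: s => [|i s IH].
  rewrite big_nil; under eq_fun do rewrite big_nil; exact: cvg_cst.
rewrite big_cons; under eq_fun do rewrite big_cons; exact: cvgD.
Qed.

Lemma cvg_ReM (a : R[i]) (x : nat -> R[i]) (X : R[i]) :
  (fun k => cRe (x k)) @ \oo --> cRe X -> (fun k => cIm (x k)) @ \oo --> cIm X ->
  (fun k => cRe (a * x k)) @ \oo --> cRe (a * X).
Proof.
move=> h1 h2; rewrite ReM.
have -> : cRe a * cRe X - cIm a * cIm X = cRe a * cRe X + (- cIm a) * cIm X by ring.
have -> : (fun k => cRe (a * x k)) = (fun k => cRe a * cRe (x k) + (- cIm a) * cIm (x k)).
  by apply/funext => k; rewrite ReM; ring.
exact: cvg_lin.
Qed.

Lemma cvg_ReMc (a : R[i]) (x : nat -> R[i]) (X : R[i]) :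
  (fun k => cRe (x k)) @ \oo --> cRe X -> (fun k => cIm (x k)) @ \oo --> cIm X ->
  (fun k => cRe (a * (x k)^*%C)) @ \oo --> cRe (a * X^*%C).
Proof.
move=> h1 h2; apply: cvg_ReM.
- by under eq_fun do rewrite Re_conj; rewrite Re_conj.
- under eq_fun do rewrite Im_conj; rewrite Im_conj; exact: cvgN.
Qed.
End Cvg.

Section Hpoly.
Variables (R : realType) (n : nat) (p : {poly R[i]}).
Definition hf (t : R) := \sum_(j < n.+1) tt (p`_j) j%:R t.
Definition Lh (x : 'I_n.+1 -> R[i]) := \sum_(j < n.+1) 2 * pi * cRe (p`_j * (x j)^*%C).

Lemma hf_cont : continuous hf.
Proof. apply: cont_sum => j; exact: tt_cont. Qed.

Lemma hf_eq t : (size p <= n.+1)%N -> hf t = cRe (p.[Ec t]).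
Proof.
move=> sp; rewrite (horner_coef_wide _ sp) Re_sum /hf; apply: eq_bigr => j _.
by rewrite ttE Ec_exp.
Qed.

Lemma rint_hf (mu : tmeas R) : onT mu -> rint mu hf = Lh (fun j => covlag mu j).
Proof.
move=> hmu; rewrite /hf (rint_sum hmu); last by move=> j; exact: tt_cont.
by apply: eq_bigr => j _; rewrite rint_tt_pos.
Qed.

Lemma Lh_cvg (x : nat -> 'I_n.+1 -> R[i]) (X : 'I_n.+1 -> R[i]) :
  (forall j, (fun k => cRe (x k j)) @ \oo --> cRe (X j)) ->
  (forall j, (fun k => cIm (x k j)) @ \oo --> cIm (X j)) ->
  (fun k => Lh (x k)) @ \oo --> Lh X.
Proof.
move=> h1 h2; apply: cvg_sumR => j; apply: cvgMl_tmp; exact: cvg_ReMc.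
Qed.
End Hpoly.

Lemma Phi_cvg (R : realType) (n : nat) (b : 'I_n.+1 -> R[i])
  (x : nat -> 'I_n.+1 -> R[i]) (X : 'I_n.+1 -> R[i]) :
  (forall j, (fun k => cRe (x k j)) @ \oo --> cRe (X j)) ->
  (forall j, (fun k => cIm (x k j)) @ \oo --> cIm (X j)) ->
  (fun k => Phi b (x k)) @ \oo --> Phi b X.
Proof.
move=> h1 h2; apply: cvg_sumR => k; apply: cvg_sumR => l; apply: cvgMl_tmp.
rewrite /tau; case: leqP => _; [exact: cvg_ReMc|exact: cvg_ReM].
Qed.

Lemma contNorm (R : realType) (f : R -> R) : continuous f -> continuous (fun t => `|f t|).
Proof. move=> cf x; exact: (continuous_comp (cf x) (@norm_continuous _ R (f x))). Qed.

Lemma mass_eq (R : realType) (mu : tmeas R) :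
  rint mu (fun _ => 1) = 2 * pi * cRe (covlag mu 0%N).
Proof.
rewrite -rint_cos; congr rint; apply/funext => t; by rewrite mul0r cos0.
Qed.

Section Key.
Variables (R : realType) (n : nat) (c : 'I_n.+1 -> R[i]) (chat : nat -> 'I_n.+1 -> R[i])
  (mu0 : tmeas R) (v : 'rV[R[i]]_n.+1).
Hypotheses (hmu0 : onT mu0) (hc : forall k : 'I_n.+1, covlag mu0 k = c k)
  (hRe : forall j, (fun k => cRe (chat k j)) @ \oo --> cRe (c j))
  (hIm : forall j, (fun k => cIm (chat k j)) @ \oo --> cIm (c j))
  (v0 : v != 0) (vT : v *m toeplitz c = 0).

Definition bv := fun l : 'I_n.+1 => (v 0 l)^*%C.

Lemma Qp_neq0 : Qp bv != 0.
Proof.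
apply: contra v0 => /eqP Q0; apply/eqP/rowP => j; rewrite mxE.
have := congr1 (fun q : {poly R[i]} => q`_j) Q0.
rewrite coef_poly ltn_ord inord_val coef0 /bv => h.
by rewrite -[v 0 j]conjcK h conjc0.
Qed.

Lemma roots_list : exists s : seq R[i],
  [/\ uniq s, (size s <= n)%N & forall z, root (Qp bv) z -> z \in s].
Proof.
have [r hr] := closed_field_poly_normal (Qp bv).
have l0 : lead_coef (Qp bv) != 0 by rewrite lead_coef_eq0 Qp_neq0.
exists (undup r); split; first exact: undup_uniq.
- have h2 : size (Qp bv) = (size r).+1.
    by rewrite {1}hr size_scale // size_prod_XsubC.
  have h1 := size_poly n.+1 (fun l => bv (inord l)).
  apply: leq_trans (size_undup r) _; rewrite -ltnS -h2; exact: h1.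
- by move=> z; rewrite {1}hr rootZ // root_prod_XsubC mem_undup.
Qed.

Lemma key (f : R -> R) : contT f -> forall eta : R, 0 < eta ->
  \forall k \near \oo, forall nu : tmeas R, onT nu ->
    (forall j : 'I_n.+1, covlag nu j = chat k j) ->
    `|rint nu f - rint mu0 f| < eta.
Proof.
move=> cfT eta eta0; have cf := cfT.1.
have pp : - pi <= (pi : R) by have := @pi_ge0 R; lra.
have [s [us ss rs]] := roots_list.
pose th z := xget 0 [set t : R | - pi <= t <= pi /\ Ec t = z].
pose val z := Complex (f (th z)) 0.
have [p [sp hp]] := interp val us.
have sp' : (size p <= n.+1)%N by apply: leq_trans sp (leq_trans ss (leqnSn n)).
pose h := hf n p.
pose g t := f t - h t.
have cg : continuous g := contB cf (@hf_cont R n p).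
have g0 : forall t, - pi <= t <= pi -> Pf bv t = 0 -> g t = 0.
  move=> t ht P0; have zin := rs _ (Pf_eq0 P0).
  rewrite /g /h hf_eq // hp // /val /=.
  have [h1 h2] := @xgetPex R 0 [set t' : R | - pi <= t' <= pi /\ Ec t' = Ec t] (ex_intro _ t (conj ht erefl)).
  by rewrite (Ec_eq_f cfT h1 ht h2) subrr.
pose M0 := `|2 * pi * cRe (c ord0)|.
have M00 : 0 <= M0 by rewrite /M0 normr_ge0.
pose eta1 := eta / (4 * (2 * M0 + 1)).
have eta10 : 0 < eta1 by rewrite /eta1 divr_gt0 // mulr_gt0 //; lra.
have eta1E : eta1 * (2 * M0 + 1) = eta / 4.
  rewrite /eta1 invfM mulrA mulfVK //; lra.
have [C [C0 hC]] : exists C, 0 <= C /\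
    forall t, - pi <= t <= pi -> `|g t| <= eta1 + C * Pf bv t.
  have [t1 _ ht1] := EVT_max pp (continuous_subspaceT (contNorm cg)).
  pose d t := eta1 - `|g t|.
  have cd : continuous d by apply: contB; [exact: contC|exact: contNorm].
  pose q t := Pf bv t + (d t + `|d t|) / 2.
  have cq : continuous q.
    apply: contD; first exact: Pf_cont.
    apply: contM; last exact: contC.
    by apply: contD => //; exact: contNorm.
  have [t0 ht0 hq] := EVT_min pp (continuous_subspaceT cq).
  have dd t : 0 <= (d t + `|d t|) / 2.
    by apply: divr_ge0 => //; case: (ger0P (d t)) => hd; lra.
  have q0 : 0 < q t0.
    rewrite /q; case: (ltP `|g t0| eta1) => hg.
      have dpos : 0 < d t0 by rewrite /d subr_gt0.
      rewrite gtr0_norm //; have := Pf_ge0 bv t0; lra.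
    have Pne : Pf bv t0 != 0.
      apply/eqP => P0; move: ht0; rewrite in_itv /= => ht0.
      by move: hg; rewrite (g0 _ ht0 P0) normr0 leNgt eta10.
    have Pp : 0 < Pf bv t0 by rewrite lt_neqAle eq_sym Pne Pf_ge0.
    have := dd t0; lra.
  exists (`|g t1| / q t0); split; first by rewrite divr_ge0 // ltW.
  move=> t ht; have htI : t \in `[- pi, pi] by rewrite in_itv.
  have CP : 0 <= `|g t1| / q t0 * Pf bv t by rewrite mulr_ge0 ?divr_ge0 ?Pf_ge0 // ltW.
  case: (leP `|g t| eta1) => hg; first lra.
  have dneg : d t < 0 by rewrite /d subr_lt0.
  have qt : q t = Pf bv t by rewrite /q ltr0_norm // subrr mul0r addr0.
  have := hq _ htI; rewrite qt => hqt.
  have h3 : `|g t1| / q t0 * q t0 <= `|g t1| / q t0 * Pf bv t.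
    by apply: ler_wpM2l => //; rewrite divr_ge0 // ltW.
  rewrite divfK ?gt_eqF // in h3.
  have := ht1 _ htI; lra.
have bnd : forall mu : tmeas R, onT mu ->
    `|rint mu g| <= eta1 * rint mu (fun _ => 1) + C * rint mu (Pf bv).
  move=> mu hmu.
  have cP : continuous (fun t => C * Pf bv t) by apply: contM; [exact: contC|exact: Pf_cont].
  have cU : continuous (fun t => eta1 + C * Pf bv t) by apply: contD => //; exact: contC.
  have e1 : rint mu (fun _ => eta1) = eta1 * rint mu (fun _ => 1).
    rewrite -rintZ //; last exact: contC.
    by congr rint; apply/funext => t; rewrite mulr1.
  have rU : rint mu (fun t => eta1 + C * Pf bv t) = eta1 * rint mu (fun _ => 1) + C * rint mu (Pf bv).
    by rewrite rintD // ?e1 ?rintZ //; [exact: Pf_cont|exact: contC].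
  rewrite -rU ler_norml; apply/andP; split.
    rewrite -rintN //; apply: rint_le => //; first exact: contN.
    by move=> t ht; have := hC t ht; rewrite ler_norml => /andP[].
  apply: rint_le => //.
  by move=> t ht; have := hC t ht; rewrite ler_norml => /andP[].
have rf : forall mu : tmeas R, onT mu -> rint mu f = rint mu h + rint mu g.
  move=> mu hmu; rewrite -rintD //; last exact: hf_cont.
  by congr rint; apply/funext => t; rewrite /g; ring.
have P0 : Phi bv c = 0 := Phi_toeplitz vT.
have /cvgrPdist_lt H1 := Lh_cvg (p := p) hRe hIm.
have H2 := (cvgrPdist_lt _ _).1 (cvgMl_tmp (a := 2 * pi) (@hRe ord0)).
have /cvgrPdist_lt H3 := Phi_cvg (b := bv) hRe hIm.
pose del := eta / (4 * (C + 1)).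
have del0 : 0 < del by rewrite /del divr_gt0 // mulr_gt0 //; lra.
have Cdel : C * del <= eta / 4.
  have -> : C * del = eta / 4 * (C / (C + 1)) by rewrite /del; field; lra.
  rewrite ler_piMr //; first lra.
  by rewrite ler_pdivrMr; lra.
have e4 : 0 < eta / 4 by lra.
have F3 := H3 del del0; have F2 := H2 _ _ 1 ltr01; have F1 := H1 _ e4.
rewrite P0 in F3.
near=> k => nu hnu hl.
have h1 : `|Lh p c - Lh p (chat k)| < eta / 4 by near: k; exact: F1.
have h2 : `|2 * pi * cRe (c ord0) - 2 * pi * cRe (chat k ord0)| < 1 by near: k; exact: F2.
have h3 : `|0 - Phi bv (chat k)| < del by near: k; exact: F3.
have Lx : rint nu h = Lh p (chat k).
  by rewrite rint_hf //; congr Lh; apply/funext => j; exact: hl.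
have Lc : rint mu0 h = Lh p c.
  by rewrite rint_hf //; congr Lh; apply/funext => j; exact: hc.
have Px : rint nu (Pf bv) = Phi bv (chat k).
  by rewrite rint_Pf //; congr Phi; apply/funext => j; exact: hl.
have Pc : rint mu0 (Pf bv) = 0.
  by rewrite rint_Pf // -P0; congr Phi; apply/funext => j; exact: hc.
have mx : rint nu (fun _ => 1) = 2 * pi * cRe (chat k ord0) by rewrite mass_eq (hl ord0).
have mc : rint mu0 (fun _ => 1) = 2 * pi * cRe (c ord0) by rewrite mass_eq (hc ord0).
have bx := bnd nu hnu; have bc := bnd mu0 hmu0.
rewrite Px mx in bx; rewrite Pc mc mulr0 addr0 in bc.
rewrite (rf nu hnu) (rf mu0 hmu0) Lx Lc.
set A := Lh p (chat k) in h1 *; set A0 := Lh p c in h1 *.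
set G1 := rint nu g in bx *; set G0 := rint mu0 g in bc *.
set m1 := 2 * pi * cRe (chat k ord0) in h2 bx *.
set m0 := 2 * pi * cRe (c ord0) in h2 bc *.
set Ph := Phi bv (chat k) in h3 bx *.
have tri : `|A + G1 - (A0 + G0)| <= `|A0 - A| + `|G1| + `|G0|.
  have -> : A + G1 - (A0 + G0) = - (A0 - A) + G1 - G0 by ring.
  apply: le_trans (ler_normB _ _) _; rewrite lerD2r.
  by apply: le_trans (ler_normD _ _) _; rewrite normrN.
have a1 : C * Ph <= eta / 4.
  apply: le_trans Cdel; apply: ler_wpM2l => //.
  by apply: le_trans (ltW h3); rewrite sub0r normrN ler_norm.
have a2 : eta1 * m1 + eta1 * m0 <= eta / 4.
  rewrite -mulrDr -eta1E; apply: ler_wpM2l; first exact: ltW.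
  have : m0 <= M0 by rewrite /M0 ler_norm.
  have : m1 - m0 < 1 by apply: le_lt_trans h2; rewrite distrC; exact: ler_norm.
  lra.
move: tri h1; rewrite distrC => tri h1.
lra.
Unshelve. all: end_near.
Qed.
End Key.

Lemma near_all (R : realType) (fs : seq (R -> R)) (P : (R -> R) -> nat -> Prop) :
  (forall f, f \in fs -> \forall k \near \oo, P f k) ->
  \forall k \near \oo, forall f, f \in fs -> P f k.
Proof.
elim: fs => [|g fs IH] H.
  by apply: nearW => k f; rewrite in_nil.
have Hg := H g (mem_head _ _).
have Hfs : \forall k \near \oo, forall f, f \in fs -> P f k.
  by apply: IH => f hf; apply: H; rewrite in_cons hf orbT.
near=> k => f; rewrite in_cons => /orP[/eqP ->|hf].
  by near: k; exact: Hg.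
by move: f hf; near: k; exact: Hfs.
Unshelve. all: end_near.
Qed.

Theorem corollary3 (R : realType) (n : nat) (c : 'I_n.+1 -> R[i])
  (chat : nat -> 'I_n.+1 -> R[i])
  (delta : tmeas R -> tmeas R -> R) :
  is_covlags c ->
  \det (toeplitz c) = 0 ->
  (forall k, is_covlags (chat k)) ->
  (forall j, (fun k => complex.Re (chat k j)) @ \oo --> complex.Re (c j)) ->
  (forall j, (fun k => complex.Im (chat k j)) @ \oo --> complex.Im (c j)) ->
  is_metric delta -> weakly_continuous delta ->
  (fun k => diam delta (Fset (chat k))) @ \oo --> 0%E.
Proof.
move=> [mu0 [hmu0 hc]] /eqP /det0P [v v0 vT] hchat hRe hIm hmet hwc.
have [d0 dEq dsym dtri] := hmet.
have d00 : delta mu0 mu0 = 0 by apply/(dEq _ _ hmu0 hmu0).2.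
have main : forall e : R, 0 < e -> \forall k \near \oo,
    (0 <= diam delta (Fset (chat k)))%E /\ (diam delta (Fset (chat k)) <= e%:E)%E.
  move=> e e0; have [fs0 [fs1 [eta [cf0 cf1 eta0 hw]]]] := hwc _ _ hmu0 hmu0 e e0.
  have Hall := @near_all R (fs0 ++ fs1) (fun f k => forall nu : tmeas R, onT nu ->
      (forall j : 'I_n.+1, covlag nu j = chat k j) -> `|rint nu f - rint mu0 f| < eta).
  have cfall : forall f, f \in fs0 ++ fs1 -> contT f.
    by move=> f; rewrite mem_cat => /orP[]; [exact: cf0|exact: cf1].
  have {}Hall := Hall (fun f hf => key hmu0 hc hRe hIm v0 vT (cfall f hf) eta0).
  near=> k.
  have Hk : forall f, f \in fs0 ++ fs1 -> forall nu : tmeas R, onT nu ->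
      (forall j : 'I_n.+1, covlag nu j = chat k j) -> `|rint nu f - rint mu0 f| < eta.
    by near: k; exact: Hall.
  have [nu [hnu hl]] := hchat k.
  split.
    apply: (@le_trans _ _ (delta nu nu)%:E); first by rewrite lee_fin (d0 _ _ hnu hnu).
    by apply: ereal_sup_ubound; exists nu; [split|exists nu; [split|]].
  apply: ge_ereal_sup => _ [m0 [hm0 hl0] [m1 [hm1 hl1] <-]].
  rewrite lee_fin.
  have w0 : weak_nbhd mu0 fs0 eta m0.
    by split => // f hf; apply: Hk => //; rewrite mem_cat hf.
  have w1 : weak_nbhd mu0 fs1 eta m1.
    by split => // f hf; apply: Hk => //; rewrite mem_cat hf orbT.
  have := hw _ _ w0 w1; rewrite d00 subr0 => h.
  exact: ltW (le_lt_trans (ler_norm _) h).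
apply: cvg_EFin.
  near=> k.
  have [h0 h1] : (0 <= diam delta (Fset (chat k)))%E /\ (diam delta (Fset (chat k)) <= 1%:E)%E.
    by near: k; exact: main 1 ltr01.
  by rewrite ge0_fin_numE // (le_lt_trans h1) // ltey.
apply/cvgrPdist_le => e e0; near=> k.
have [h0 h1] : (0 <= diam delta (Fset (chat k)))%E /\ (diam delta (Fset (chat k)) <= e%:E)%E.
  by near: k; exact: main e e0.
have hf : diam delta (Fset (chat k)) \is a fin_num.
  by rewrite ge0_fin_numE // (le_lt_trans h1) // ltey.
rewrite /= sub0r normrN ger0_norm; last by rewrite fine_ge0.
by rewrite -lee_fin fineK.
Unshelve. all: end_near.
Qed.
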